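(* Let $f:X\to Y$ be a definable function in a saturated model $\mathcal U$. Then $f$ is always almost saturated if and only if for all global types $p,q\in S_X(\mathcal U)$, if $f_*(p)=f_*(q)$ and this type is not realized, then $p=q$.
   Context: For a definable $Z\subseteq X$, $Z$ is almost saturated with respect to $f$ if $f(Z)\cap f(X\setminus Z)$ is finite; $f$ is always almost saturated if every definable subset of $X$ is almost saturated with respect to $f$. $S_X(\mathcal U)$ is the space of complete types over $\mathcal U$ concentrating on $X$, and $f_*(p)$ is the pushforward type $\{D: f^{-1}(D)\in p\}$. *)

(* Defs.v *)
From HB Require Import structures.
From mathcomp Require Import all_boot all_order.
From mathcomp Require Import boolp classical_sets functions cardinality.

Set Implicit Arguments.
Unset Strict Implicit.
Unset Printing Implicit Defensive.

Local Open Scope classical_set_scope.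
Local Open Scope card_scope.

Definition tcat (U : Type) (n k : nat) (x : 'I_n -> U) (b : 'I_k -> U)
  : 'I_(n + k) -> U :=
  fun i => match fintype.split i with inl j => x j | inr j => b j end.

(* A first-order structure with universe U, presented (Tarski-style) by its
   collections Def0 n of 0-definable (parameter-free definable) subsets of U^n.
   These are exactly the sets definable by L-formulas without parameters in
   some first-order language L (Morleyization). *)
Unset Implicit Arguments.
Record structure (U : Type) := Structure {
  Def0 : forall n : nat, set (set ('I_n -> U));
  Def0_setT : forall n : nat, Def0 n (@setT ('I_n -> U));
  Def0_setC : forall (n : nat) (D : set ('I_n -> U)), Def0 n D -> Def0 n (~` D);
  Def0_setI : forall (n : nat) (D E : set ('I_n -> U)),
      Def0 n D -> Def0 n E -> Def0 n (D `&` E);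
  Def0_diag : forall (n : nat) (i j : 'I_n), Def0 n [set x | x i = x j];
  Def0_reindex : forall (m n : nat) (s : 'I_m -> 'I_n) (D : set ('I_m -> U)),
      Def0 m D -> Def0 n [set x : 'I_n -> U | D (fun i => x (s i))];
  Def0_proj : forall (n k : nat) (D : set ('I_(n + k) -> U)),
      Def0 (n + k) D -> Def0 n [set x | exists b, D (tcat x b)]
}.
Set Implicit Arguments.

Section Defs.
Variables (U : Type) (M : structure U).

Definition ADef (A : set U) (n : nat) (S : set ('I_n -> U)) : Prop :=
  exists k (D : set ('I_(n + k) -> U)) (b : 'I_k -> U),
    @Def0 U M (n + k) D /\ (forall i, A (b i)) /\ S = [set x | D (tcat x b)].

Definition Definable (n : nat) (S : set ('I_n -> U)) : Prop := ADef setT S.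

(* Saturated: for every A subset of U with |A| < |U|, every collection of
   A-definable subsets of U^n with the finite intersection property
   (i.e. every partial n-type over A) is realized in U. *)
Definition saturated : Prop :=
  forall A : set U, ~ ([set: U] #<= A) ->
  forall (n : nat) (F : set (set ('I_n -> U))),
    (forall S, F S -> ADef A S) ->
    (forall s : seq (set ('I_n -> U)), (forall S, S \in s -> F S) ->
        exists x, forall S, S \in s -> S x) ->
    exists x, forall S, F S -> S x.

(* A global type in n variables: an ultrafilter of the Boolean algebra of
   U-definable subsets of U^n (a complete type over U). *)
Definition global_type (n : nat) (p : set (set ('I_n -> U))) : Prop :=
  [/\ forall S, p S -> Definable S,
      ~ p set0,
      forall S T, p S -> p T -> p (S `&` T),
      forall S T, p S -> Definable T -> S `<=` T -> p T &
      forall S, Definable S -> p S \/ p (~` S)].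

Definition type_on (n : nat) (X : set ('I_n -> U)) (p : set (set ('I_n -> U)))
  : Prop := global_type p /\ p X.

Definition definable_fun (n m : nat) (X : set ('I_n -> U)) (Y : set ('I_m -> U))
  (f : ('I_n -> U) -> ('I_m -> U)) : Prop :=
  Definable X /\ Definable Y /\ (forall x, X x -> Y (f x)) /\
  Definable [set z : 'I_(n + m) -> U |
               exists x, X x /\ z = tcat x (f x)].

Definition pushforward (n m : nat) (X : set ('I_n -> U))
  (f : ('I_n -> U) -> ('I_m -> U)) (p : set (set ('I_n -> U)))
  : set (set ('I_m -> U)) :=
  [set D | Definable D /\ p (X `&` f @^-1` D)].

Definition realized (m : nat) (q : set (set ('I_m -> U))) : Prop :=
  exists b : 'I_m -> U, q = [set D | Definable D /\ D b].

Definition almost_saturated (n m : nat) (X : set ('I_n -> U))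
  (f : ('I_n -> U) -> ('I_m -> U)) (Z : set ('I_n -> U)) : Prop :=
  finite_set ((f @` Z) `&` (f @` (X `\` Z))).

Definition always_almost_saturated (n m : nat) (X : set ('I_n -> U))
  (f : ('I_n -> U) -> ('I_m -> U)) : Prop :=
  forall Z, Definable Z -> Z `<=` X -> almost_saturated X f Z.

End Defs.

(* Main.v *)
Require Import Defs.
From mathcomp Require Import all_boot all_order.
From mathcomp Require Import boolp classical_sets functions cardinality.
Local Open Scope classical_set_scope.
Set Implicit Arguments. Unset Strict Implicit. Unset Printing Implicit Defensive.

Lemma tcat_l (U : Type) n k (x : 'I_n -> U) (b : 'I_k -> U) j :
  tcat x b (lshift k j) = x j.
Proof. by rewrite /tcat (unsplitK (inl j)). Qed.
Lemma tcat_r (U : Type) n k (x : 'I_n -> U) (b : 'I_k -> U) j :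
  tcat x b (rshift n j) = b j.
Proof. by rewrite /tcat (unsplitK (inr j)). Qed.

Lemma split_l n k (j : 'I_n) : fintype.split (lshift k j) = inl j.
Proof. exact: (unsplitK (inl j)). Qed.
Lemma split_r n k (j : 'I_k) : fintype.split (rshift n j) = inr j.
Proof. exact: (unsplitK (inr j)). Qed.

Lemma tcat_inj (U : Type) n k (x x' : 'I_n -> U) (b b' : 'I_k -> U) :
  tcat x b = tcat x' b' -> x = x' /\ b = b'.
Proof.
move=> e; split; apply/funext => j.
  by rewrite -(tcat_l x b) -(tcat_l x' b') e.
by rewrite -(tcat_r x b) -(tcat_r x' b') e.
Qed.

Definition b0 (U : Type) : 'I_0 -> U.
Proof. by case. Defined.

Lemma set_ext (T : Type) (A B : set T) : (forall x, A x <-> B x) -> A = B.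
Proof. by move=> h; apply/funext => x; apply/propext. Qed.

Section Gen.
Variables (U : Type) (N : structure U).
Local Notation Df := (@Def0 U N).

Lemma Df_ext n (A B : set ('I_n -> U)) : (forall x, A x <-> B x) -> Df n A -> Df n B.
Proof. by move=> h; rewrite (set_ext h). Qed.

Lemma Df_setT n : Df n setT. Proof. exact: Def0_setT. Qed.
Lemma Df_I n (A B : set ('I_n -> U)) : Df n A -> Df n B -> Df n (A `&` B).
Proof. exact: Def0_setI. Qed.
Lemma Df_C n (A : set ('I_n -> U)) : Df n A -> Df n (~` A).
Proof. exact: Def0_setC. Qed.
Lemma Df_D n (A B : set ('I_n -> U)) : Df n A -> Df n B -> Df n (A `\` B).
Proof. by move=> hA hB; apply: Df_I => //; apply: Df_C. Qed.

Lemma Df_preim n m (G : set ('I_(n + m) -> U)) (D : set ('I_m -> U)) :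
  Df (n + m) G -> Df m D -> Df n [set x | exists y, G (tcat x y) /\ D y].
Proof.
move=> hG hD.
have h2 := @Def0_reindex U N _ _ (fun i : 'I_m => rshift n i) _ hD.
have := @Def0_proj U N _ _ _ (Df_I hG h2); apply: Df_ext => x /=.
split=> -[y hy]; exists y.
  by move: hy => [h1]; rewrite (_ : (fun i => _) = y) //; apply/funext => i; rewrite tcat_r.
by move: hy => [h1 h3]; split => //; rewrite (_ : (fun i => _) = y) //; apply/funext => i; rewrite tcat_r.
Qed.

Definition swp n m (i : 'I_(n + m)) : 'I_(m + n) :=
  match fintype.split i with inl j => rshift m j | inr j => lshift n j end.

Lemma Df_img n m (G : set ('I_(n + m) -> U)) (Z : set ('I_n -> U)) :
  Df (n + m) G -> Df n Z -> Df m [set y | exists x, G (tcat x y) /\ Z x].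
Proof.
move=> hG hZ.
have h1 := @Def0_reindex U N _ _ (@swp n m) _ hG.
have h2 := @Def0_reindex U N _ _ (fun i : 'I_n => rshift m i) _ hZ.
have := @Def0_proj U N _ _ _ (Df_I h1 h2); apply: Df_ext => y /=.
have e : forall x : 'I_n -> U, (fun i => tcat y x (swp i)) = tcat x y.
  move=> x; apply/funext => i; rewrite /swp /tcat; case: (fintype.split i) => j.
    by rewrite (unsplitK (inr j)).
  by rewrite (unsplitK (inl j)).
have e2 : forall x : 'I_n -> U, (fun i => tcat y x (rshift m i)) = x.
  by move=> x; apply/funext => i; rewrite tcat_r.
by split=> -[x hx]; exists x; rewrite e e2 in hx *.
Qed.

Lemma Df_all_list n (I : eqType) (P : I -> set ('I_n -> U)) (s : seq I) :
  (forall i, Df n (P i)) -> Df n [set x | forall i, i \in s -> P i x].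
Proof.
move=> hP; elim: s => [|a s IH].
  by apply: Df_ext (Df_setT n) => x; split.
apply: Df_ext (Df_I (hP a) IH) => x /=; split.
  by move=> [h1 h2] i; rewrite in_cons => /orP[/eqP->|]//; apply: h2.
move=> h; split; first by apply: h; rewrite in_cons eqxx.
by move=> i hi; apply: h; rewrite in_cons hi orbT.
Qed.

Lemma Df_diagall m : Df (m + m) [set z | forall i : 'I_m, z (lshift m i) = z (rshift m i)].
Proof.
have := @Df_all_list _ _ (fun i : 'I_m => [set z : 'I_(m+m) -> U | z (lshift m i) = z (rshift m i)])
  (enum 'I_m) (fun i => @Def0_diag U N _ (lshift m i) (rshift m i)).
by apply: Df_ext => z /=; split=> h i //; apply: h; rewrite mem_enum.
Qed.

End Gen.

Section DefStruct.
Variables (U : Type) (M : structure U).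
Local Notation Df := (@Def0 U M).
Local Notation Dfb := (@Definable U M).

Lemma mkDef n k (D : set ('I_(n + k) -> U)) (b : 'I_k -> U) :
  Df (n + k) D -> Dfb [set x | D (tcat x b)].
Proof. by move=> h; exists k, D, b. Qed.

Lemma Dfb_ext n (A B : set ('I_n -> U)) : (forall x, A x <-> B x) -> Dfb A -> Dfb B.
Proof. by move=> h; rewrite (set_ext h). Qed.

Lemma Df_Dfb n (D : set ('I_n -> U)) : Df n D -> Dfb D.
Proof.
move=> h.
have := mkDef (b0 U) (@Def0_reindex U M _ _ (fun i : 'I_n => lshift 0 i) _ h).
apply: Dfb_ext => x /=; rewrite (_ : (fun i => _) = x) //.
by apply/funext => i; rewrite tcat_l.
Qed.

Lemma Dfb_T n : Dfb (@setT ('I_n -> U)).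
Proof. exact/Df_Dfb/(@Def0_setT U M). Qed.

Lemma Dfb_C n (D : set ('I_n -> U)) : Dfb D -> Dfb (~` D).
Proof.
move=> [k [E [b [hE [_ ->]]]]]; apply: (Dfb_ext _ (mkDef b (@Def0_setC U M _ _ hE))) => x; by [].
Qed.

Definition s1 n k1 k2 (i : 'I_(n + k1)) : 'I_(n + (k1 + k2)) :=
  match fintype.split i with inl j => lshift _ j | inr j => rshift n (lshift k2 j) end.
Definition s2 n k1 k2 (i : 'I_(n + k2)) : 'I_(n + (k1 + k2)) :=
  match fintype.split i with inl j => lshift _ j | inr j => rshift n (rshift k1 j) end.

Lemma Dfb_I n (A B : set ('I_n -> U)) : Dfb A -> Dfb B -> Dfb (A `&` B).
Proof.
move=> [k1 [E1 [b1 [h1 [_ ->]]]]] [k2 [E2 [b2 [h2 [_ ->]]]]].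
have := mkDef (tcat b1 b2) (@Def0_setI U M _ _ _ (@Def0_reindex U M _ _ (@s1 n k1 k2) _ h1)
   (@Def0_reindex U M _ _ (@s2 n k1 k2) _ h2)).
apply: Dfb_ext => x /=.
rewrite (_ : (fun i => tcat x (tcat b1 b2) (s1 k2 i)) = tcat x b1); last first.
  apply/funext => i; rewrite /s1 /tcat; case: (fintype.split i) => j.
    by rewrite (unsplitK (inl j)).
  by rewrite (unsplitK (inr (lshift k2 j))) (unsplitK (inl j)).
rewrite (_ : (fun i => tcat x (tcat b1 b2) (s2 k1 i)) = tcat x b2) //.
apply/funext => i; rewrite /s2 /tcat; case: (fintype.split i) => j.
  by rewrite (unsplitK (inl j)).
by rewrite (unsplitK (inr (rshift k1 j))) (unsplitK (inr j)).
Qed.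

Lemma Dfb_diag n (i j : 'I_n) : Dfb [set x | x i = x j].
Proof.
have := mkDef (b0 U) (@Def0_diag U M _ (lshift 0 i) (lshift 0 j)).
by apply: Dfb_ext => x /=; rewrite !tcat_l.
Qed.

Definition s3 m n k (s : 'I_m -> 'I_n) (i : 'I_(m + k)) : 'I_(n + k) :=
  match fintype.split i with inl j => lshift k (s j) | inr j => rshift n j end.

Lemma Dfb_re m n (s : 'I_m -> 'I_n) (D : set ('I_m -> U)) :
  Dfb D -> Dfb [set x : 'I_n -> U | D (fun i => x (s i))].
Proof.
move=> [k [E [b [h [_ ->]]]]].
have := mkDef b (@Def0_reindex U M _ _ (@s3 m n k s) _ h).
apply: Dfb_ext => x /=.
rewrite (_ : (fun i => tcat x b (@s3 m n k s i)) = tcat (fun i => x (s i)) b) //.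
apply/funext => i; rewrite /s3 /tcat; case: (fintype.split i) => j.
  by rewrite (unsplitK (inl (s j))).
by rewrite (unsplitK (inr j)).
Qed.

Definition sg n k k' (i : 'I_((n + k') + k)) : 'I_((n + k) + k') :=
  match fintype.split i with
  | inl i1 => match fintype.split i1 with
              | inl a => lshift k' (lshift k a)
              | inr c => rshift (n + k) c end
  | inr j => lshift k' (rshift n j) end.

Lemma Dfb_proj n k' (D : set ('I_(n + k') -> U)) :
  Dfb D -> Dfb [set x | exists c, D (tcat x c)].
Proof.
move=> [k [E [b [h [_ ->]]]]].
have h1 := @Def0_reindex U M _ _ (@sg n k k') _ h.
have := mkDef b (@Def0_proj U M _ _ _ h1).
apply: Dfb_ext => x /=.
have e : forall c, (fun i => tcat (tcat x b) c (@sg n k k' i)) = tcat (tcat x c) b.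
  move=> c; apply/funext => i; case: (split_ordP i) => j ->; rewrite /sg ?split_l ?split_r.
    by case: (split_ordP j) => a ->; rewrite ?split_l ?split_r ?tcat_l ?tcat_r ?tcat_l ?tcat_r.
  by rewrite ?tcat_l ?tcat_r ?tcat_l ?tcat_r.
by split=> -[c hc]; exists c; rewrite e in hc *.
Qed.

Definition sp n k k2 (i : 'I_((n + k) + k2)) : 'I_(n + (k + k2)) :=
  match fintype.split i with
  | inl i1 => match fintype.split i1 with
              | inl a => lshift (k + k2) a
              | inr c => rshift n (lshift k2 c) end
  | inr j => rshift n (rshift k j) end.

Lemma Dfb_param n k (S : set ('I_(n + k) -> U)) (b : 'I_k -> U) :
  Dfb S -> Dfb [set x | S (tcat x b)].
Proof.
move=> [k2 [E [b2 [h [_ ->]]]]].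
have := mkDef (tcat b b2) (@Def0_reindex U M _ _ (@sp n k k2) _ h).
apply: Dfb_ext => x /=.
rewrite (_ : (fun i => _) = tcat (tcat x b) b2) //.
apply/funext => i; case: (split_ordP i) => j ->; rewrite /sp ?split_l ?split_r.
  by case: (split_ordP j) => a ->; rewrite ?split_l ?split_r ?tcat_l ?tcat_r ?tcat_l ?tcat_r.
by rewrite ?tcat_l ?tcat_r ?tcat_l ?tcat_r.
Qed.

Definition DS : structure U :=
  @Structure U (fun n => @Definable U M n) (@Dfb_T) (@Dfb_C) (@Dfb_I) (@Dfb_diag) (@Dfb_re) (@Dfb_proj).

Lemma Dfb_set1 m (b : 'I_m -> U) : Dfb [set b].
Proof.
have := Dfb_param b (@Df_diagall U DS m).
apply: Dfb_ext => y /=; split.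
  by move=> h; apply/funext => i; move: (h i); rewrite tcat_l tcat_r.
by move=> -> i; rewrite tcat_l tcat_r.
Qed.

End DefStruct.
Lemma finite_avoid T (P : set T -> Prop) (F : set T) :
  finite_set F -> P setT -> (forall A B, P A -> P B -> P (A `&` B)) ->
  (forall y, F y -> exists D, P D /\ ~ D y) -> exists D, P D /\ forall y, F y -> ~ D y.
Proof.
elim/Peq: T => T in P F *.
move=> /finite_seqP [s ->] hT hI; elim: s => [|a s IH] hy.
  by exists setT; split.
have [Da [hDa nDa]] := hy a (mem_head a s).
have [Ds [hDs nDs]] : exists D, P D /\ forall y, [set` s] y -> ~ D y.
  by apply: IH => y hs; apply: hy; rewrite /= in_cons hs orbT.
exists (Da `&` Ds); split; first exact: hI.
move=> y /=; rewrite in_cons => /orP[/eqP -> [] //| hs [_ ]]; exact: nDs.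
Qed.
From mathcomp Require filter.
Lemma ultra_ex T (F0 : set (set T)) : ~ F0 set0 -> F0 setT ->
  (forall A B, F0 A -> F0 B -> F0 (A `&` B)) -> (forall A B, A `<=` B -> F0 A -> F0 B) ->
  exists G : set (set T), [/\ F0 `<=` G, ~ G set0,
    (forall A B, G A -> G B -> G (A `&` B)), (forall A B, A `<=` B -> G A -> G B) &
    (forall A, G A \/ G (~` A))].
Proof.
move=> h0 hT hI hS.
have PF : filter.ProperFilter F0.
  by apply: filter.Build_ProperFilter => //; apply: filter.Build_Filter.
have [G [UG sub]] := filter.ultraFilterLemma PF.
have PG : filter.ProperFilter G := filter.ultra_proper.
have FG : filter.Filter G := filter.filter_filter.
exists G; split => //.
- exact: filter.filter_not_empty.
- by move=> A B; apply: filter.filterI.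
- by move=> A B; apply: filter.filterS.
- by move=> A; apply: filter.in_ultra_setVsetC.
Qed.

Lemma gt_ne U (M : structure U) k (p : set (set ('I_k -> U))) S :
  global_type M p -> p S -> exists x, S x.
Proof.
move=> [_ h0 _ _ _] hS; apply: contrapT => hn; apply: h0.
suff <- : S = set0 by [].
by apply/set_ext => x; split => // hx; apply: hn; exists x.
Qed.

Lemma gt_T U (M : structure U) k (p : set (set ('I_k -> U))) :
  global_type M p -> p setT.
Proof.
move=> [_ h0 _ _ h5]; case: (h5 setT (@Dfb_T U M k)) => // h.
by exfalso; apply: h0; rewrite -setCT.
Qed.

Section Main.
Variables (U : Type) (M : structure U) (n m : nat) (X : set ('I_n -> U))
  (Y : set ('I_m -> U)) (f : ('I_n -> U) -> ('I_m -> U)) (hf : definable_fun M X Y f).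

Local Notation Dfb := (@Definable U M _).

Definition Gr := [set z : 'I_(n + m) -> U | exists x, X x /\ z = tcat x (f x)].

Lemma GrP x y : Gr (tcat x y) <-> X x /\ y = f x.
Proof.
split; last by move=> [hx ->]; exists x.
by move=> [x' [hx' /tcat_inj [-> ->]]].
Qed.

Lemma hX : Dfb X. Proof. by case: hf. Qed.
Lemma hGr : Dfb Gr. Proof. by case: hf => [_ [_ [_ h]]]. Qed.

Lemma preim_def D : Dfb D -> Dfb (X `&` f @^-1` D).
Proof.
move=> hD; have := @Df_preim U (DS M) n m Gr D hGr hD.
apply: Dfb_ext => x /=; split.
  by move=> [y [/GrP [hx ->] hy]].
by move=> [hx hy]; exists (f x); split => //; apply/GrP.
Qed.

Lemma img_def Z : Dfb Z -> Z `<=` X -> Dfb (f @` Z).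
Proof.
move=> hZ sZ; have := @Df_img U (DS M) n m Gr Z hGr hZ.
apply: Dfb_ext => y /=; split.
  by move=> [x [/GrP [hx ->] hz]]; exists x.
by move=> [x hz <-]; exists x; split => //; apply/GrP; split => //; apply: sZ.
Qed.

Section PF.
Variables (p : set (set ('I_n -> U))) (hp : type_on M X p).
Local Notation r := (pushforward M X f p).

Lemma pf_T : r setT.
Proof.
case: hp => [[_ _ _ h4 _] pX]; split; first exact: Dfb_T.
by apply: h4 pX (preim_def (@Dfb_T U M m)) _ => x hx.
Qed.

Lemma pf_I A B : r A -> r B -> r (A `&` B).
Proof.
case: hp => [[_ _ h3 h4 _] pX] [hA pA] [hB pB]; split; first exact: Dfb_I.
apply: h4 (h3 _ _ pA pB) (preim_def (Dfb_I hA hB)) _.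
by move=> x [[hx ha] [_ hb]].
Qed.

Lemma pf_ult D : Dfb D -> r D \/ r (~` D).
Proof.
case: hp => [[h1 _ h3 h4 h5] pX] hD.
case: (h5 _ (preim_def hD)) => h; [left | right]; first by [].
split; first exact: Dfb_C.
apply: h4 (h3 _ _ pX h) (preim_def (Dfb_C hD)) _.
by move=> x [hx hn]; split => // hd; apply: hn.
Qed.

Lemma pf_avoid (F : set ('I_m -> U)) : finite_set F -> ~ realized M r ->
  exists D, r D /\ forall y, F y -> ~ D y.
Proof.
move=> hF hnr; apply: finite_avoid => //; [exact: pf_T | exact: pf_I |].
move=> y _; apply: contrapT => hn; apply: hnr; exists y.
apply/set_ext => D; split.
  move=> hD; split; first by case: hD.
  by apply: contrapT => nD; apply: hn; exists D.
move=> [hD hy]; case: (pf_ult hD) => // hc.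
by exfalso; apply: hn; exists (~` D); split.
Qed.

End PF.

Lemma fwd_key (hA : always_almost_saturated M X f) p q :
  type_on M X p -> type_on M X q ->
  pushforward M X f p = pushforward M X f q ->
  ~ realized M (pushforward M X f p) -> forall S, p S -> q S.
Proof.
move=> hp hq hpq hnr S pS; apply: contrapT => nqS.
have [[p1 p2 p3 p4 p5] pX] := hp.
have [[q1 q2 q3 q4 q5] qX] := hq.
have hS := p1 _ pS.
have qC : q (~` S) by case: (q5 _ hS).
pose Z' := X `&` S.
have hZ' : Dfb Z' := Dfb_I hX hS.
have hfin := hA Z' hZ' (fun x hx => hx.1).
have [D [rD nD]] := pf_avoid hp hfin hnr.
pose Z2 := Z' `&` (X `&` f @^-1` D).
have hZ2 : Dfb Z2 := Dfb_I hZ' (preim_def rD.1).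
have hE : Dfb (f @` Z2) := img_def hZ2 (fun x hx => hx.2.1).
have pZ2 : p Z2 := p3 _ _ (p3 _ _ pX pS) rD.2.
have rE : pushforward M X f p (f @` Z2).
  split => //; apply: p4 pZ2 (preim_def hE) _.
  by move=> x hx; split; [exact: hx.2.1 | exists x].
rewrite hpq in rE rD.
have := q3 _ _ (q3 _ _ qC rE.2) rD.2.
move=> /(gt_ne hq.1) [x [[nSx [hx [x' [[hx' hSx'] [_ hDx']] efx]]] [_ hDx]]].
apply: (nD (f x)) hDx; split.
  by exists x' => //; split.
by exists x => //; split => // -[].
Qed.


Lemma construct (Z0 : set ('I_n -> U)) (r : set (set ('I_m -> U))) :
  Dfb Z0 -> Z0 `<=` X ->
  (forall D, r D -> Dfb D) -> r setT -> (forall A B, r A -> r B -> r (A `&` B)) ->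
  (forall D, Dfb D -> r D \/ r (~` D)) ->
  (forall D, r D -> exists x, Z0 x /\ D (f x)) ->
  exists p, [/\ type_on M X p, p Z0 & pushforward M X f p = r].
Proof.
move=> hZ0 sZ0 rdef rT rI rult hne.
pose F0 := [set S | exists D, r D /\ (Z0 `&` f @^-1` D) `<=` S].
have [Gp [sub g0 gI gS gU]] : exists G : set (set ('I_n -> U)), [/\ F0 `<=` G, ~ G set0,
    (forall A B, G A -> G B -> G (A `&` B)), (forall A B, A `<=` B -> G A -> G B) &
    (forall A, G A \/ G (~` A))].
  apply: ultra_ex.
  - move=> [D [rD s]]; have [x [hz hd]] := hne D rD; exact: (s x (conj hz hd)).
  - by exists setT; split.
  - move=> A B [D1 [r1 s1]] [D2 [r2 s2]]; exists (D1 `&` D2); split; first exact: rI.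
    by move=> x [hz [h1 h2]]; split; [apply: s1 | apply: s2].
  - by move=> A B sAB [D [rD s]]; exists D; split => //; apply: subset_trans sAB.
have GZ0 : Gp Z0 by apply: sub; exists setT; split => // x [].
pose p := [set S | Dfb S /\ Gp S].
have gtp : global_type M p.
  split.
  - by move=> S [].
  - by move=> [_].
  - by move=> S T [dS gS'] [dT gT]; split; [exact: Dfb_I | exact: gI].
  - by move=> S T [dS gS'] dT sST; split => //; apply: gS sST gS'.
  - by move=> S dS; case: (gU S) => h; [left | right]; split => //; apply: Dfb_C.
exists p; split => //.
- by split => //; split; [exact: hX | exact: gS sZ0 GZ0].
apply/set_ext => S; split.
  move=> [dS [dpre gpre]]; case: (rult S dS) => // hc.
  have g2 : Gp (Z0 `&` f @^-1` (~` S)) by apply: sub; exists (~` S); split.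
  exfalso; apply: g0; apply: gS (gI _ _ g2 gpre).
  by move=> x [[_ hn] [_ hs]].
move=> rS; split; first exact: rdef.
split; first exact: preim_def (rdef _ rS).
by apply: sub; exists S; split => // x [hz hs]; split => //; apply: sZ0.
Qed.

Lemma bwd : (forall p q : set (set ('I_n -> U)),
     type_on M X p -> type_on M X q ->
     pushforward M X f p = pushforward M X f q ->
     ~ realized M (pushforward M X f p) ->
     p = q) -> always_almost_saturated M X f.
Proof.
move=> H Z hZ sZ; rewrite /almost_saturated; apply: contrapT => hinf.
pose W := f @` Z `&` f @` (X `\` Z).
pose F0 := [set S : set ('I_m -> U) | exists A, finite_set A /\ W `\` A `<=` S].
have [Gw [sub g0 gI gS gU]] : exists G : set (set ('I_m -> U)), [/\ F0 `<=` G, ~ G set0,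
    (forall A B, G A -> G B -> G (A `&` B)), (forall A B, A `<=` B -> G A -> G B) &
    (forall A, G A \/ G (~` A))].
  apply: ultra_ex.
  - move=> [A [fA s]]; apply: hinf; apply: sub_finite_set fA.
    by move=> y wy; apply: contrapT => nA; exact: (s y (conj wy nA)).
  - by exists set0; split => //; exact: finite_set0.
  - move=> A B [A1 [f1 s1]] [A2 [f2 s2]]; exists (A1 `|` A2); split.
      by rewrite finite_setU.
    move=> y [wy nA]; split; [apply: s1 | apply: s2]; split => // h; apply: nA; [by left | by right].
  - by move=> A B sAB [A1 [fA s]]; exists A1; split => //; apply: subset_trans sAB.
have gne : forall A, Gw A -> exists y, A y.
  move=> A gA; apply: contrapT => hn; apply: g0.
  suff <- : A = set0 by [].
  by apply/set_ext => x; split => // hx; apply: hn; exists x.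
have GW : Gw W by apply: sub; exists set0; split; [exact: finite_set0 | move=> y []].
pose r := [set D | Dfb D /\ Gw D].
have rdef : forall D, r D -> Dfb D by move=> D [].
have rT : r setT by split; [exact: Dfb_T | apply: sub; exists set0; split; [exact: finite_set0|]].
have rI : forall A B, r A -> r B -> r (A `&` B).
  by move=> A B [dA gA] [dB gB]; split; [exact: Dfb_I | exact: gI].
have rult : forall D, Dfb D -> r D \/ r (~` D).
  by move=> D dD; case: (gU D) => h; [left | right]; split => //; apply: Dfb_C.
have hWr : forall D, r D -> exists y, D y /\ W y.
  by move=> D [_ gD]; have [y [hd hw]] := gne _ (gI _ _ gD GW); exists y.
have [p [hp pZ pfp]] : exists p, [/\ type_on M X p, p Z & pushforward M X f p = r].
  apply: construct => //.
  by move=> D /hWr [y [hd [[x hx ex] _]]]; exists x; rewrite ex.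
have [q [hq qZ pfq]] : exists q, [/\ type_on M X q, q (X `\` Z) & pushforward M X f q = r].
  apply: construct => //; first exact: Dfb_I hX (Dfb_C hZ).
  by move=> D /hWr [y [hd [_ [x hx ex]]]]; exists x; rewrite ex.
have epq : p = q.
  apply: H => //; first by rewrite pfp pfq.
  rewrite pfp => -[b hb].
  have : r (~` [set b]).
    split; first exact: Dfb_C (Dfb_set1 M b).
    by apply: sub; exists [set b]; split; [exact: finite_set1 | move=> y [_ h]].
  by rewrite hb => -[_]; apply.
rewrite epq in pZ.
have [[_ _ q3 _ _] _] := hq.
by have [x [hz [_ hnz]]] := gt_ne hq.1 (q3 _ _ pZ qZ).
Qed.

End Main.

Theorem lemma2p22 (U : Type) (M : structure U) (Msat : saturated M)
  (n m : nat) (X : set ('I_n -> U)) (Y : set ('I_m -> U))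
  (f : ('I_n -> U) -> ('I_m -> U)) (hf : definable_fun M X Y f) :
  always_almost_saturated M X f <->
  (forall p q : set (set ('I_n -> U)),
     type_on M X p -> type_on M X q ->
     pushforward M X f p = pushforward M X f q ->
     ~ realized M (pushforward M X f p) ->
     p = q).
Proof.
split; last exact: (@bwd _ _ _ _ _ _ _ hf).
move=> hA p q hp hq hpq hnr; apply/set_ext => S; split.
  exact: (@fwd_key _ _ _ _ _ _ _ hf hA p q hp hq hpq hnr S).
apply: (@fwd_key _ _ _ _ _ _ _ hf hA q p hq hp (esym hpq) _ S).
by rewrite -hpq.
Qed.
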